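(* Let $a,b,c$ be positive numbers with $a<b<c$. Define $\mathcal Z_{a,b}=\{0\}$ if $a/b\notin\mathbb Q$, and $\mathcal Z_{a,b}=\{0,b/q,2b/q,\dots,(p-1)b/q\}$ if $a/b=p/q$ with $p,q$ coprime positive integers. Then $\mathcal D_{a,b,c}=\emptyset$ if and only if $\mathcal D_{a,b,c}\cap(\mathcal Z_{a,b}\cup(c-\mathcal Z_{a,b}))=\emptyset$.
   Context: For $a,b,c>0$ and $t\in\mathbb R$, $\mathbf M_{a,b,c}(t)=(\chi_{[0,c)}(t-\mu+\lambda))_{\mu\in a\mathbb Z,\lambda\in b\mathbb Z}$ is the infinite matrix with rows indexed by $a\mathbb Z$ and columns by $b\mathbb Z$, acting by $(\mathbf M_{a,b,c}(t)\mathbf x)(\mu)=\sum_{\lambda\in b\mathbb Z}\chi_{[0,c)}(t-\mu+\lambda)\mathbf x(\lambda)$. $\mathcal B_b$ is the set of vectors $(\mathbf x(\lambda))_{\lambda\in b\mathbb Z}$ with entries in $\{0,1\}$, and $\mathcal B_b^0=\{\mathbf x\in\mathcal B_b:\mathbf x(0)=1\}$. $\mathbf 2$ denotes the vector indexed by $a\mathbb Z$ all of whose entries are $2$. $\mathcal D_{a,b,c}=\{t\in\mathbb R:\mathbf M_{a,b,c}(t)\mathbf x=\mathbf 2\text{ for some }\mathbf x\in\mathcal B_b^0\}$. *)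

(* Defs.v *)
From Stdlib Require Import Reals ZArith Znumtheory List.
Open Scope R_scope.

Definition chi0c (c t : R) : R :=
  if Rle_dec 0 t then (if Rlt_dec t c then 1 else 0) else 0.

(* 0/1 vectors indexed by b Z (index n represents lambda = b n) *)
Definition binvec (x : Z -> R) : Prop := forall n, x n = 0 \/ x n = 1.
Definition binvec0 (x : Z -> R) : Prop := binvec x /\ x 0%Z = 1.

Definition symsum (f : Z -> R) (N : nat) : R :=
  fold_right Rplus 0
    (map (fun k => f (Z.of_nat k - Z.of_nat N)%Z) (seq 0 (2 * N + 1))).

(* (M_{a,b,c}(t) x)(mu) for mu = a m : the series
   sum_{n in Z} chi_[0,c)(t - a m + b n) x(b n), whose terms vanish outside
   a finite range; we say it equals v when the symmetric partial sums are
   eventually equal to v. *)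
Definition Mrow_eq (a b c t : R) (x : Z -> R) (m : Z) (v : R) : Prop :=
  exists N0 : nat, forall N : nat, (N0 <= N)%nat ->
    symsum (fun n => chi0c c (t - a * IZR m + b * IZR n) * x n) N = v.

Definition M_eq_2 (a b c t : R) (x : Z -> R) : Prop :=
  forall m : Z, Mrow_eq a b c t x m 2.

Definition D_set (a b c : R) (t : R) : Prop :=
  exists x, binvec0 x /\ M_eq_2 a b c t x.

Definition rationalR (r : R) : Prop :=
  exists p q : Z, (q > 0)%Z /\ r = IZR p / IZR q.

Definition Zab (a b : R) (z : R) : Prop :=
  (~ rationalR (a / b) /\ z = 0) \/
  (exists p q : Z, (p > 0)%Z /\ (q > 0)%Z /\ Z.gcd p q = 1%Z /\
     a / b = IZR p / IZR q /\
     exists k : Z, (0 <= k < p)%Z /\ z = IZR k * b / IZR q).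

(* Main.v *)
Require Import Defs.
From Stdlib Require Import Reals ZArith Znumtheory List Lra Lia.
From Stdlib Require Import Classical ClassicalEpsilon FunctionalExtensionality.
Open Scope R_scope.

Fixpoint sumZ (f : Z -> R) (lo : Z) (len : nat) : R :=
  match len with O => 0 | S l => f lo + sumZ f (lo + 1)%Z l end.

Lemma fold_sumZ f N len s :
  fold_right Rplus 0 (map (fun k => f (Z.of_nat k - Z.of_nat N)%Z) (seq s len))
  = sumZ f (Z.of_nat s - Z.of_nat N)%Z len.
Proof.
  revert s; induction len as [|len IH]; intros s; simpl; [reflexivity|].
  rewrite IH. f_equal. f_equal. lia.
Qed.

Lemma symsum_sumZ f N : symsum f N = sumZ f (- Z.of_nat N)%Z (2*N+1).
Proof. unfold symsum. rewrite fold_sumZ. f_equal. Qed.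

Lemma sumZ_split f lo n1 n2 :
  sumZ f lo (n1 + n2) = sumZ f lo n1 + sumZ f (lo + Z.of_nat n1)%Z n2.
Proof.
  revert lo; induction n1 as [|n1 IH]; intros lo; simpl.
  - rewrite Z.add_0_r. ring.
  - rewrite IH. replace (lo + 1 + Z.of_nat n1)%Z with (lo + Z.pos (Pos.of_succ_nat n1))%Z by lia. ring.
Qed.

Lemma sumZ_zero f lo len :
  (forall k, (lo <= k < lo + Z.of_nat len)%Z -> f k = 0) -> sumZ f lo len = 0.
Proof.
  revert lo; induction len as [|len IH]; intros lo H; simpl; [reflexivity|].
  rewrite H by lia. rewrite IH; [ring|]. intros k Hk. apply H. lia.
Qed.

Lemma sumZ_shift f w lo len :
  sumZ (fun k => f (k + w)%Z) lo len = sumZ f (lo + w)%Z len.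
Proof.
  revert lo; induction len as [|len IH]; intros lo; simpl; [reflexivity|].
  rewrite IH. f_equal. f_equal. lia.
Qed.

Lemma sumZ_window f lo len A l0 :
  (lo <= A)%Z -> (A + Z.of_nat l0 <= lo + Z.of_nat len)%Z ->
  (forall k, (k < A \/ A + Z.of_nat l0 <= k)%Z -> f k = 0) ->
  sumZ f lo len = sumZ f A l0.
Proof.
  intros H1 H2 H3.
  set (n1 := Z.to_nat (A - lo)).
  assert (Hn1 : (lo + Z.of_nat n1 = A)%Z) by (unfold n1; lia).
  assert (Hlen : len = (n1 + (l0 + (len - n1 - l0)))%nat) by (unfold n1 in *; lia).
  rewrite Hlen, sumZ_split, sumZ_split, Hn1.
  rewrite (sumZ_zero f lo n1), (sumZ_zero f (A + Z.of_nat l0)%Z); try ring.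
  - intros k Hk. apply H3. lia.
  - intros k Hk. apply H3. lia.
Qed.

Definition supp (g : Z -> R) (K : nat) := forall n, (Z.of_nat K < Z.abs n)%Z -> g n = 0.

Lemma symsum_support g K N : supp g K -> (K <= N)%nat -> symsum g N = symsum g K.
Proof.
  intros Hs HN. rewrite !symsum_sumZ. apply sumZ_window; try lia.
  intros k Hk. apply Hs. lia.
Qed.

Lemma symsum_shift g K w N : supp g K -> (K + Z.abs_nat w <= N)%nat ->
  symsum (fun k => g (k + w)%Z) N = symsum g K.
Proof.
  intros Hs HN. rewrite !symsum_sumZ, sumZ_shift. apply sumZ_window; try lia.
  intros k Hk. apply Hs. lia.
Qed.

Lemma chi_support b c u0 : 0 < b -> 0 < c -> exists K : nat,
  forall u n, u0 <= u <= u0 + 1 -> (Z.of_nat K < Z.abs n)%Z -> chi0c c (u + b * IZR n) = 0.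
Proof.
  intros hb hc.
  destruct (archimed ((Rabs u0 + 1 + c) / b)) as [H1 _].
  set (z := up ((Rabs u0 + 1 + c) / b)) in *.
  exists (Z.to_nat z). intros u n Hu Hn.
  assert (Hz : (0 <= z)%Z).
  { apply le_IZR. assert (0 <= (Rabs u0 + 1 + c)/b).
    { apply Rmult_le_pos; [pose proof (Rabs_pos u0); lra | left; apply Rinv_0_lt_compat; lra]. }
    lra. }
  rewrite Z2Nat.id in Hn by lia.
  assert (Hb' : b * IZR z > Rabs u0 + 1 + c).
  { apply (Rmult_gt_compat_l b) in H1; [|lra].
    replace (b * ((Rabs u0 + 1 + c) / b)) with (Rabs u0 + 1 + c) in H1 by (field; lra). lra. }
  pose proof (Rle_abs u0). pose proof (Rle_abs (-u0)). rewrite Rabs_Ropp in *.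
  unfold chi0c. destruct (Rle_dec 0 (u + b * IZR n)); [|reflexivity].
  destruct (Rlt_dec (u + b * IZR n) c); [|reflexivity].
  exfalso. destruct (Z_lt_le_dec n 0) as [Hneg|Hpos].
  - assert (IZR n + 1 <= - IZR z) by (rewrite <- opp_IZR; rewrite <- plus_IZR; apply IZR_le; lia).
    assert (b * (IZR n + 1) <= b * (- IZR z)) by (apply Rmult_le_compat_l; lra). nra.
  - assert (IZR z + 1 <= IZR n) by (rewrite <- plus_IZR; apply IZR_le; lia).
    assert (b * (IZR z + 1) <= b * IZR n) by (apply Rmult_le_compat_l; lra). nra.
Qed.

Lemma shift_a a b c t x k : M_eq_2 a b c t x -> M_eq_2 a b c (t - a * IZR k) x.
Proof.
  intros H m. destruct (H (m + k)%Z) as [N0 HN]. exists N0. intros N HN0.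
  rewrite <- (HN N HN0). f_equal. apply functional_extensionality; intro n.
  rewrite plus_IZR. f_equal. f_equal. ring.
Qed.

Lemma shift_b a b c t x w : 0 < b -> 0 < c -> M_eq_2 a b c t x ->
  M_eq_2 a b c (t + b * IZR w) (fun k => x (k + w)%Z).
Proof.
  intros hb hc H m. destruct (H m) as [N0 HN].
  destruct (chi_support b c (t - a * IZR m) hb hc) as [K HK].
  set (g := fun n => chi0c c (t - a * IZR m + b * IZR n) * x n).
  assert (Hs : supp g K).
  { intros n Hn. unfold g. rewrite (HK (t - a * IZR m)); [ring|lra|lia]. }
  exists (Nat.max N0 K + Z.abs_nat w)%nat. intros N HN1.
  replace (fun n => chi0c c (t + b * IZR w - a * IZR m + b * IZR n) * x (n + w)%Z)
    with (fun n => g (n + w)%Z).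
  2:{ apply functional_extensionality; intro n. unfold g. rewrite plus_IZR.
      f_equal. f_equal. ring. }
  rewrite (symsum_shift g K w N Hs) by lia.
  rewrite <- (symsum_support g K (Nat.max N0 K) Hs) by lia.
  apply HN. lia.
Qed.

Lemma chi_rc c u : exists eta, 0 < eta /\ forall h, 0 <= h < eta -> chi0c c (u + h) = chi0c c u.
Proof.
  unfold chi0c.
  destruct (Rle_dec 0 u).
  - destruct (Rlt_dec u c).
    + exists (c - u). split; [lra|]. intros h Hh.
      destruct (Rle_dec 0 (u+h)); [|lra]. destruct (Rlt_dec (u+h) c); lra.
    + exists 1. split; [lra|]. intros h Hh.
      destruct (Rle_dec 0 (u+h)); [|lra]. destruct (Rlt_dec (u+h) c); lra.
  - exists (-u). split; [lra|]. intros h Hh. destruct (Rle_dec 0 (u+h)); lra.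
Qed.

Lemma chi_rc_fin b c u0 (K : nat) : exists eta, 0 < eta /\
  forall n h, (Z.abs n <= Z.of_nat K)%Z -> 0 <= h < eta ->
    chi0c c (u0 + h + b * IZR n) = chi0c c (u0 + b * IZR n).
Proof.
  induction K as [|K IH].
  - destruct (chi_rc c u0) as [e [He H]]. exists e. split; auto.
    intros n h Hn Hh. assert (n = 0%Z) by lia. subst n.
    rewrite Rmult_0_r, !Rplus_0_r. auto.
  - destruct IH as [e [He H]].
    destruct (chi_rc c (u0 + b * IZR (Z.of_nat (S K)))) as [e1 [He1 H1]].
    destruct (chi_rc c (u0 + b * IZR (- Z.of_nat (S K)))) as [e2 [He2 H2]].
    exists (Rmin e (Rmin e1 e2)). split.
    { repeat apply Rmin_glb_lt; auto. }
    intros n h Hn Hh.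
    pose proof (Rmin_l e (Rmin e1 e2)). pose proof (Rmin_r e (Rmin e1 e2)).
    pose proof (Rmin_l e1 e2). pose proof (Rmin_r e1 e2).
    destruct (Z_le_gt_dec (Z.abs n) (Z.of_nat K)).
    + apply H; auto; lra.
    + destruct (Z_lt_le_dec n 0).
      * assert (n = - Z.of_nat (S K))%Z by lia. subst n.
        rewrite <- (H2 h) by lra. f_equal. ring.
      * assert (n = Z.of_nat (S K))%Z by lia. subst n.
        rewrite <- (H1 h) by lra. f_equal. ring.
Qed.

Lemma pick01 (W : R -> R -> Prop) :
  (forall e1 e2 v, 0 < e1 -> e1 <= e2 -> W e1 v -> W e2 v) ->
  (forall eps, 0 < eps -> exists v, (v = 0 \/ v = 1) /\ W eps v) ->
  exists v, (v = 0 \/ v = 1) /\ forall eps, 0 < eps -> W eps v.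
Proof.
  intros Hm H.
  destruct (classic (forall eps, 0 < eps -> W eps 0)) as [H0|H0].
  - exists 0. auto.
  - apply not_all_ex_not in H0. destruct H0 as [e0 H0].
    apply imply_to_and in H0. destruct H0 as [He0 H0].
    exists 1. split; [auto|]. intros eps He.
    destruct (H (Rmin eps e0)) as [v [[Hv|Hv] HW]].
    { apply Rmin_glb_lt; auto. }
    + subst v. exfalso. apply H0. apply (Hm (Rmin eps e0)); auto.
      apply Rmin_glb_lt; auto. apply Rmin_r.
    + subst v. apply (Hm (Rmin eps e0)); auto.
      apply Rmin_glb_lt; auto. apply Rmin_l.
Qed.

Definition good a b c t0 (K : nat) (y : Z -> R) : Prop :=
  forall eps, 0 < eps -> exists t' x, t0 <= t' < t0 + eps /\ binvec0 x /\
    M_eq_2 a b c t' x /\ forall n, (Z.abs n <= Z.of_nat K)%Z -> x n = y n.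

Definition upd (y : Z -> R) (k : Z) (v : R) : Z -> R :=
  fun n => if Z.eq_dec n k then v else y n.

Lemma good_mono a b c t0 K y e1 e2 :
  0 < e1 -> e1 <= e2 ->
  (exists t' x, t0 <= t' < t0 + e1 /\ binvec0 x /\ M_eq_2 a b c t' x /\ 
     forall n, (Z.abs n <= Z.of_nat K)%Z -> x n = y n) ->
  (exists t' x, t0 <= t' < t0 + e2 /\ binvec0 x /\ M_eq_2 a b c t' x /\ 
     forall n, (Z.abs n <= Z.of_nat K)%Z -> x n = y n).
Proof.
  intros _ H [t' [x [H1 H2]]]. exists t', x. split; [lra|auto].
Qed.

Lemma good_step a b c t0 K y : good a b c t0 K y ->
  exists y', good a b c t0 (S K) y' /\ forall n, (Z.abs n <= Z.of_nat K)%Z -> y' n = y n.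
Proof.
  intros Hg.
  set (k1 := Z.of_nat (S K)). set (k2 := (- Z.of_nat (S K))%Z).
  destruct (pick01 (fun eps v => exists t' x, t0 <= t' < t0 + eps /\ binvec0 x /\
     M_eq_2 a b c t' x /\ (forall n, (Z.abs n <= Z.of_nat K)%Z -> x n = y n) /\ x k1 = v))
    as [v1 [Hv1 Hg1]].
  { intros e1 e2 v He1 Hle [t' [x [H1 H2]]]. exists t', x. split; [lra|auto]. }
  { intros eps He. destruct (Hg eps He) as [t' [x [H1 [H2 [H3 H4]]]]].
    exists (x k1). split; [apply (proj1 H2)|]. exists t', x. auto. }
  set (y1 := upd y k1 v1).
  destruct (pick01 (fun eps v => exists t' x, t0 <= t' < t0 + eps /\ binvec0 x /\
     M_eq_2 a b c t' x /\ (forall n, (Z.abs n <= Z.of_nat K)%Z \/ n = k1 -> x n = y1 n) /\ x k2 = v))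
    as [v2 [Hv2 Hg2]].
  { intros e1 e2 v He1 Hle [t' [x [H1 H2]]]. exists t', x. split; [lra|auto]. }
  { intros eps He. destruct (Hg1 eps He) as [t' [x [H1 [H2 [H3 [H4 H5]]]]]].
    exists (x k2). split; [apply (proj1 H2)|]. exists t', x. split; [auto|]. split; [auto|]. split; [auto|]. split; [|auto].
    intros n [Hn|Hn]; unfold y1, upd; destruct (Z.eq_dec n k1).
    - rewrite e; exact H5.
    - apply H4; exact Hn.
    - rewrite e; exact H5.
    - congruence. }
  exists (upd y1 k2 v2). split.
  - intros eps He. destruct (Hg2 eps He) as [t' [x [H1 [H2 [H3 [H4 H5]]]]]].
    exists t', x. split; [auto|]. split; [auto|]. split; [auto|]. intros n Hn.
    unfold upd at 1. destruct (Z.eq_dec n k2); [rewrite e; exact H5|].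
    apply H4. unfold k1, k2 in *. lia.
  - intros n Hn. unfold y1, upd. unfold k1, k2.
    destruct (Z.eq_dec n (- Z.of_nat (S K))); [lia|].
    destruct (Z.eq_dec n (Z.of_nat (S K))); [lia|]. reflexivity.
Qed.

Lemma closure a b c t0 : 0 < b -> 0 < c ->
  (forall eps, 0 < eps -> exists t' x, t0 <= t' < t0 + eps /\ binvec0 x /\ M_eq_2 a b c t' x) ->
  exists x, binvec0 x /\ M_eq_2 a b c t0 x.
Proof.
  intros hb hc H.
  set (y0 := fun _ : Z => 1).
  assert (G0 : good a b c t0 0 y0).
  { intros eps He. destruct (H eps He) as [t' [x [H1 [H2 H3]]]]. exists t', x.
    split; [auto|]. split; [auto|]. split; [auto|]. intros n Hn. assert (n = 0%Z) by lia. subst n. apply (proj2 H2). }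
  set (nextY := fun K y => epsilon (inhabits y)
       (fun y' => good a b c t0 (S K) y' /\ forall n, (Z.abs n <= Z.of_nat K)%Z -> y' n = y n)).
  set (Y := fix Y K := match K with O => y0 | S K' => nextY K' (Y K') end).
  assert (HY : forall K, good a b c t0 K (Y K)).
  { induction K as [|K IH]; [exact G0|].
    simpl. unfold nextY. apply (epsilon_spec (inhabits (Y K))
      (fun y' => good a b c t0 (S K) y' /\ forall n, (Z.abs n <= Z.of_nat K)%Z -> y' n = Y K n)).
    apply good_step. exact IH. }
  assert (HYs : forall K n, (Z.abs n <= Z.of_nat K)%Z -> Y (S K) n = Y K n).
  { intros K n Hn. simpl. unfold nextY.
    apply (epsilon_spec (inhabits (Y K))
      (fun y' => good a b c t0 (S K) y' /\ forall n, (Z.abs n <= Z.of_nat K)%Z -> y' n = Y K n)).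
    - apply good_step. exact (HY K).
    - exact Hn. }
  assert (HYc : forall d K n, (Z.abs n <= Z.of_nat K)%Z -> Y (d + K)%nat n = Y K n).
  { induction d as [|d IH]; intros K n Hn; [reflexivity|].
    simpl. change (Y (S (d + K))%nat n = Y K n). rewrite HYs by lia. apply IH; auto. }
  set (xs := fun n => Y (Z.abs_nat n) n).
  assert (Hxs : forall K n, (Z.abs n <= Z.of_nat K)%Z -> xs n = Y K n).
  { intros K n Hn. unfold xs. replace K with ((K - Z.abs_nat n) + Z.abs_nat n)%nat by lia.
    rewrite HYc by lia. reflexivity. }
  exists xs. split; [split|].
  - intros n. destruct (HY (Z.abs_nat n) 1 ltac:(lra)) as [t' [x [_ [[Hb _] [_ Ha]]]]].
    unfold xs. rewrite <- Ha by lia. apply Hb.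
  - unfold xs. simpl. reflexivity.
  - intros m.
    destruct (chi_support b c (t0 - a * IZR m) hb hc) as [K HK].
    destruct (chi_rc_fin b c (t0 - a * IZR m) K) as [eta [Heta Hrc]].
    destruct (HY K (Rmin eta 1) ltac:(apply Rmin_glb_lt; lra)) as [t' [x [Ht [Hbx [HM Hag]]]]].
    pose proof (Rmin_l eta 1). pose proof (Rmin_r eta 1).
    destruct (HM m) as [N0 HN]. exists N0. intros N HN0. rewrite <- (HN N HN0).
    f_equal. apply functional_extensionality. intro n.
    destruct (Z_le_gt_dec (Z.abs n) (Z.of_nat K)).
    + rewrite Hxs with (K := K) by auto. rewrite <- Hag by auto.
      replace (t' - a * IZR m + b * IZR n) with (t0 - a * IZR m + (t' - t0) + b * IZR n) by ring.
      rewrite Hrc; auto. lra.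
    + rewrite (HK (t0 - a * IZR m)); [|lra|lia].
      rewrite (HK (t' - a * IZR m)); [ring|lra|lia].
Qed.

Lemma lub_approx (E : R -> Prop) D r : is_lub E D -> r < D -> exists d, E d /\ r < d.
Proof.
  intros [Hub Hl] Hr. apply NNPP. intro Hn.
  assert (D <= r); [|lra]. apply Hl. intros d Hd.
  destruct (Rle_lt_dec d r); auto. exfalso. apply Hn. exists d. auto.
Qed.

Lemma claim a b c t x : 0 < a -> 0 < b -> 0 < c -> binvec0 x -> M_eq_2 a b c t x ->
  forall eps, 0 < eps -> exists t2 x2, ((0 <= t2 < eps) \/ (c <= t2 < c + eps)) /\
     binvec0 x2 /\ M_eq_2 a b c t2 x2.
Proof.
  intros ha hb hc [Hbin H0] HM eps Heps.
  set (P := fun d => 0 <= d /\ forall (m n : Z), x n = 1 ->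
     ~ (a * IZR m - t <= b * IZR n < a * IZR m - t + d) /\
     ~ (a * IZR m - t <= b * IZR n - c < a * IZR m - t + d)).
  assert (HP0 : P 0). { split; [lra|]. intros m n _. split; lra. }
  assert (Hbd : forall d, P d -> d <= a).
  { intros d [Hd Hd']. set (m0 := Int_part (t / a)).
    destruct (base_Int_part (t / a)) as [B1 B2]. fold m0 in B1, B2.
    assert (a * IZR m0 <= t).
    { apply (Rmult_le_compat_l a) in B1; [|lra].
      replace (a * (t / a)) with t in B1 by (field; lra). lra. }
    assert (t < a * IZR m0 + a).
    { assert (t / a < IZR m0 + 1) by lra. apply (Rmult_lt_compat_l a) in H1; [|lra].
      replace (a * (t / a)) with t in H1 by (field; lra). lra. }
    destruct (Rle_lt_dec d a); auto. exfalso.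
    destruct (Hd' m0 0%Z H0) as [C _]. apply C. rewrite Rmult_0_r. lra. }
  destruct (completeness P) as [D HD].
  { exists a. intros d Hd. apply Hbd. auto. }
  { exists 0. auto. }
  assert (HD0 : 0 <= D) by (apply (proj1 HD); auto).
  assert (HPD : forall m n, x n = 1 ->
     ~ (a * IZR m - t <= b * IZR n < a * IZR m - t + D) /\
     ~ (a * IZR m - t <= b * IZR n - c < a * IZR m - t + D)).
  { intros m n Hx. split; intros [C1 C2].
    - destruct (lub_approx P D (b * IZR n - (a * IZR m - t)) HD) as [d [[_ Hd] Hr]]; [lra|].
      apply (proj1 (Hd m n Hx)). lra.
    - destruct (lub_approx P D (b * IZR n - c - (a * IZR m - t)) HD) as [d [[_ Hd] Hr]]; [lra|].
      apply (proj2 (Hd m n Hx)). lra. }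
  assert (HMD : M_eq_2 a b c (t - D) x).
  { intros m. destruct (HM m) as [N0 HN]. exists N0. intros N HN0. rewrite <- (HN N HN0).
    f_equal. apply functional_extensionality. intro n.
    destruct (Hbin n) as [Hx|Hx]; rewrite Hx; [ring|].
    destruct (HPD m n Hx) as [C1 C2].
    unfold chi0c.
    destruct (Rle_dec 0 (t - D - a * IZR m + b * IZR n));
    destruct (Rle_dec 0 (t - a * IZR m + b * IZR n));
    destruct (Rlt_dec (t - D - a * IZR m + b * IZR n) c);
    destruct (Rlt_dec (t - a * IZR m + b * IZR n) c); try reflexivity; exfalso; lra. }
  assert (HnP : ~ P (D + eps)).
  { intro HP. pose proof (proj1 HD _ HP). lra. }
  unfold P in HnP.
  assert (Hex : exists m n, x n = 1 /\
     ((a * IZR m - t <= b * IZR n < a * IZR m - t + (D + eps)) \/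
      (a * IZR m - t <= b * IZR n - c < a * IZR m - t + (D + eps)))).
  { apply NNPP. intro Hn. apply HnP. split; [lra|]. intros m n Hx.
    split; intro C; apply Hn; exists m, n; auto. }
  destruct Hex as [m [n [Hx Hc]]].
  destruct (HPD m n Hx) as [C1 C2].
  exists (t - D + b * IZR n - a * IZR m), (fun k => x (k + n)%Z).
  split; [|split].
  - destruct Hc as [Hc|Hc]; [left|right]; lra.
  - split; [intro k; apply Hbin|]. simpl. exact Hx.
  - apply shift_a. apply shift_b; auto.
Qed.

Lemma Zab0 a b : 0 < a -> 0 < b -> Zab a b 0.
Proof.
  intros ha hb. destruct (classic (rationalR (a / b))) as [Hr|Hr].
  - right. destruct Hr as [p [q [Hq Hpq]]].
    assert (Hpos : (p > 0)%Z).
    { assert (0 < a / b) by (apply Rdiv_lt_0_compat; auto).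
      assert (0 < IZR q) by (apply IZR_lt; lia).
      assert (0 < IZR p).
      { rewrite Hpq in H. apply (Rmult_lt_compat_r (IZR q)) in H; auto.
        unfold Rdiv in H. rewrite Rmult_assoc, Rinv_l in H by lra. lra. }
      apply lt_IZR in H1. lia. }
    set (g := Z.gcd p q).
    assert (Hg : (0 < g)%Z) by (unfold g; pose proof (Z.gcd_nonneg p q);
       destruct (Z.eq_dec (Z.gcd p q) 0) as [e|]; [apply Z.gcd_eq_0 in e; lia|lia]).
    destruct (Z.gcd_divide_l p q) as [p' Hp']. destruct (Z.gcd_divide_r p q) as [q' Hq'].
    fold g in Hp', Hq'.
    exists p', q'. split; [nia|]. split; [nia|]. split.
    + assert (Z.gcd p q = g * Z.gcd p' q')%Z.
      { rewrite Hp', Hq' at 1. rewrite (Z.mul_comm p' g), (Z.mul_comm q' g).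
        rewrite Z.gcd_mul_mono_l. lia. }
      fold g in H. nia.
    + split.
      * rewrite Hpq, Hp', Hq', !mult_IZR. field.
        assert (0 < IZR g) by (apply IZR_lt; auto).
        assert (0 < IZR q') by (apply IZR_lt; nia). lra.
      * exists 0%Z. split; [lia|]. unfold Rdiv. ring.
  - left. auto.
Qed.

Theorem theorem3p3 (a b c : R) (ha : 0 < a) (hab : a < b) (hbc : b < c) :
  (forall t : R, ~ D_set a b c t) <->
  (forall t : R, D_set a b c t -> ~ (Zab a b t \/ Zab a b (c - t))).
Proof.
  split.
  - intros H t Ht. exfalso. exact (H t Ht).
  - intros H t [x [Hx HM]].
    assert (hb : 0 < b) by lra. assert (hc : 0 < c) by lra.
    pose proof (claim a b c t x ha hb hc Hx HM) as Hcl.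
    destruct (classic (forall eps, 0 < eps -> exists t' x', 0 <= t' < 0 + eps /\ binvec0 x' /\ M_eq_2 a b c t' x')) as [H0|H0].
    + destruct (closure a b c 0 hb hc H0) as [x0 Hx0].
      apply (H 0); [exists x0; exact Hx0|]. left. apply Zab0; lra.
    + apply not_all_ex_not in H0. destruct H0 as [e0 H0].
      apply imply_to_and in H0. destruct H0 as [He0 H0].
      assert (Hc : forall eps, 0 < eps -> exists t' x', c <= t' < c + eps /\ binvec0 x' /\ M_eq_2 a b c t' x').
      { intros eps He. destruct (Hcl (Rmin eps e0)) as [t2 [x2 [Hr [Hb2 HM2]]]].
        { apply Rmin_glb_lt; auto. }
        pose proof (Rmin_l eps e0). pose proof (Rmin_r eps e0).
        destruct Hr as [Hr|Hr].
        - exfalso. apply H0. exists t2, x2. split; [lra|auto].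
        - exists t2, x2. split; [lra|auto]. }
      destruct (closure a b c c hb hc Hc) as [x0 Hx0].
      apply (H c); [exists x0; exact Hx0|]. right. rewrite Rminus_diag. apply Zab0; lra.
Qed.
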